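(* Let $n \geq 3$ be an integer, let $p(x) \in \mathcal{T}_n$, and let $r = \deg \mathrm{Min}(p,x)$ with $3 \leq r \leq n$. Let $q(x) \in \mathcal{J}(p(x))$ and let $f(x) = q(x)/\gcd(p(x),p'(x)) \in \mathbb{Z}[x]$. Write $\mathrm{Min}(p,x) = \sum_{i=0}^r b_i x^{r-i}$ and $f(x) = \sum_{i=0}^{r-1} c_i x^{r-1-i}$ with integer coefficients. Then $c_0 = b_0 = 1$, $c_1 = b_1$, and $c_2 = b_2 + n - 1$.
   Context: A nonzero real polynomial is real-rooted if all its complex roots are real. For $n\ge1$, a Seidel trace polynomial of degree $n$ is a real-rooted polynomial $p(x)=\sum_{i=0}^n a_i x^{n-i}\in\mathbb{Z}[x]$ of degree $n$ with $a_0=1$, $a_1=0$, and $a_2=-\binom{n}{2}$ if $n\ge2$; $\mathcal{T}_n$ is the set of these. For real-rooted $p,q$ with $\deg p = m$, $\deg q = m-1$, roots $\lambda_1\le\dots\le\lambda_m$ of $p$ and $\mu_1\le\dots\le\mu_{m-1}$ of $q$, we say $q$ interlaces $p$ if $\lambda_i \le \mu_i \le \lambda_{i+1}$ for all $i$. For $p\in\mathcal{T}_n$, $\mathcal{J}(p(x))$ is the set of integer polynomials $q(x)$ of degree $n-1$ with $q\in\mathcal{T}_{n-1}$ and $q$ interlacing $p$. Here $\gcd(p(x),p'(x))$ is the monic gcd and $\mathrm{Min}(p,x) := p(x)/\gcd(p(x),p'(x))$. *)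

(* Defs.v *)
From HB Require Import structures.
From mathcomp Require Import all_boot all_order all_algebra all_field.
Set Implicit Arguments. Unset Strict Implicit. Unset Printing Implicit Defensive.
Import Order.TTheory GRing.Theory Num.Theory.
Local Open Scope ring_scope.

(* Complex roots are taken in algC (algebraic complex numbers), which contains
   all complex roots of integer polynomials. *)
Definition toC (p : {poly int}) : {poly algC} := map_poly intr p.
Definition toQ (p : {poly int}) : {poly rat} := map_poly intr p.

Definition real_rooted (p : {poly int}) : Prop :=
  p != 0 /\ forall z : algC, root (toC p) z -> z \is Num.real.

Definition sorted_roots (p : {poly int}) (ls : seq algC) : Prop :=
  all (fun x => x \is Num.real) ls /\ sorted <=%R ls /\
  toC p = lead_coef (toC p) *: \prod_(x <- ls) ('X - x%:P).

(* p(x) = sum_{i=0}^n a_i x^{n-i}, so a_i = p`_(n-i) *)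
Definition seidel_trace (n : nat) (p : {poly int}) : Prop :=
  (1 <= n)%N /\ real_rooted p /\ size p = n.+1 /\
  p`_n = 1 /\ p`_(n.-1) = 0 /\ ((2 <= n)%N -> p`_(n - 2) = - ('C(n, 2))%:Z).

Definition interlaces (q p : {poly int}) : Prop :=
  real_rooted p /\ real_rooted q /\ (size p).-1 = (size q).-1 + 1 /\
  exists ls mus : seq algC, sorted_roots p ls /\ sorted_roots q mus /\
    forall i, (i < size mus)%N -> ls`_i <= mus`_i /\ mus`_i <= ls`_i.+1.

Definition J_set (n : nat) (p q : {poly int}) : Prop :=
  size q = n /\ seidel_trace n.-1 q /\ interlaces q p.

Definition gcd_pp' (p : {poly int}) : {poly rat} :=
  let g := gcdp (toQ p) (toQ p)^`() in (lead_coef g)^-1 *: g.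

Definition MinP (p : {poly int}) : {poly rat} := toQ p %/ gcd_pp' p.

(* Main.v *)
Require Import Defs.
From HB Require Import structures.
From mathcomp Require Import all_boot all_order all_algebra all_field.
From mathcomp Require Import zify ring.
Import Order.TTheory GRing.Theory Num.Theory.
Local Open Scope ring_scope.

Lemma coef_toQ (p : {poly int}) i : (toQ p)`_i = (p`_i)%:~R.
Proof. by rewrite /toQ coef_map. Qed.

Theorem lemma4p3 (n : nat) (p q : {poly int}) :
  (3 <= n)%N -> seidel_trace n p ->
  (3 <= (size (MinP p)).-1)%N -> ((size (MinP p)).-1 <= n)%N ->
  J_set n p q ->
  let r := (size (MinP p)).-1 in
  let f := toQ q %/ gcd_pp' p in
  let b := fun i => (MinP p)`_(r - i) in
  let c := fun i => f`_(r.-1 - i) in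
  size f = r /\
  c 0%N = 1 /\ b 0%N = 1 /\ c 1%N = b 1%N /\ c 2%N = b 2%N + (n.-1)%:R.
Proof.
move=> n3 [_ [[p0 _] [sp [pn [pn1 pn2]]]]] r3 _ [sq [[_ [_ [_ [qn [qn1 qn2]]]]] _]].
have pn2' := pn2 (ltnW n3).
have qn2' : q`_(n.-1 - 2) = - ('C(n.-1, 2))%:Z by apply: qn2; lia.
move=> r f b c.
set g := gcd_pp' p.
have defM : MinP p = toQ p %/ g by [].
have pQ0 : toQ p != 0.
  by rewrite -size_poly_eq0 /toQ size_map_poly_id0 ?sp // lead_coefE sp /= pn.
have g0 : g != 0.
  rewrite /g /gcd_pp' scaler_eq0 negb_or gcdp_eq0 negb_and pQ0 andbT.
  by rewrite invr_eq0 lead_coef_eq0 gcdp_eq0 negb_and pQ0.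
have gm : lead_coef g = 1.
  rewrite /g /gcd_pp' lead_coefZ mulVf // lead_coef_eq0 gcdp_eq0 negb_and pQ0 //.
set k := (size g).-1.
have szg : size g = k.+1 by rewrite /k prednK // size_poly_gt0.
have szpQ : size (toQ p) = n.+1 by rewrite /toQ size_map_poly_id0 ?sp // lead_coefE sp /= pn.
have szqQ : size (toQ q) = n by rewrite /toQ size_map_poly_id0 ?sq // lead_coefE sq qn.
have szM : size (MinP p) = (n.+1 - k)%N by rewrite defM size_divp // szpQ szg.
have rE : r = (n - k)%N by rewrite /r szM; lia.
have kn : (k + 3 <= n)%N by move: r3; rewrite -/r rE; lia.
have szf : size f = r by rewrite /f size_divp // szqQ szg rE.

set M := toQ p %/ g.
have Z : forall (P : {poly rat}) m j, (size P <= m)%N -> (m <= j)%N -> P`_j = 0.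
  by move=> P m j /leq_sizeP; apply.
have eq_q := divp_eq (toQ q) g; rewrite -/f in eq_q.
have eq_p := divp_eq (toQ p) g; rewrite -/M in eq_p.
set Rq := toQ q %% g in eq_q.
set Rp := toQ p %% g in eq_p.
have szRq : (size Rq <= k)%N by rewrite -ltnS -szg ltn_modp.
have szRp : (size Rp <= k)%N by rewrite -ltnS -szg ltn_modp.
set F := 'X * f - M.
have eqF : F * g = ('X * toQ q - toQ p) - ('X * Rq - Rp).
  rewrite {1}eq_q {1}eq_p /F; ring.
have H1 : forall j, (n.-1 <= j)%N -> (F*g)`_j = 0.
  move=> j hj; rewrite eqF !coefB !coefXM.
  have -> : (j == 0%N) = false by apply/eqP; lia.
  rewrite (Z Rq k) // ?(Z Rp k) //; try lia.
  rewrite !coef_toQ subrr subr0.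
  have [->|jn] := eqVneq j n.
    by rewrite pn qn subrr.
  have [->|jn1] := eqVneq j n.-1.
    by rewrite pn1 qn1 subrr.
  have jn' : (n < j)%N by lia.
  rewrite -!coef_toQ (Z _ n (j.-1)) ?szqQ // ?(Z _ n.+1 j) ?szpQ ?subrr //; lia.
have H2 : (F*g)`_(n.-2) = (n.-1)%:R.
  rewrite eqF !coefB !coefXM.
  have -> : (n.-2 == 0%N) = false by apply/eqP; lia.
  rewrite (Z Rq k) // ?(Z Rp k) //; try lia.
  rewrite !coef_toQ subrr subr0.
  idtac.
  have -> : (n.-2).-1 = (n.-1 - 2)%N by lia.
  have -> : n.-2 = (n - 2)%N by lia.
  rewrite qn2' pn2'.
  case: n n3 {sp pn pn1 pn2 qn qn1 qn2 sq szpQ szqQ szM rE kn H1 eqF pn2' qn2'} => [|m] //= _.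
  rewrite binS bin1 PoszD opprD !rmorphD /= !rmorphN /=.
  rewrite opprB addrC subrK; exact: pmulrn.
have nz : (n.-1)%:R != 0 :> rat by rewrite pnatr_eq0; lia.
have F0 : F != 0 by apply: contraNneq nz => F0; rewrite -H2 F0 mul0r coef0.
have szFg : size (F * g) = (n.-1)%N.
  apply/eqP; rewrite eqn_leq; apply/andP; split.
    by apply/leq_sizeP => j /H1.
  rewrite leqNgt; apply/negP => h.
  have e : n.-1 = (n.-2).+1 by lia.
  by move: nz; rewrite -H2 (Z _ (size (F * g))) ?eqxx // -ltnS -e.
have szF : size F = (r.-1)%N.
  move: szFg; rewrite size_mul // szg rE addnS /= => hh.
  clear -kn hh; set s := size F in hh *; clearbody s k; lia.
have lF : F`_(r - 2) = (n.-1)%:R.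
  have := lead_coefM F g; rewrite gm mulr1 !lead_coefE szFg szF.
  have -> : (r.-1).-1 = (r - 2)%N by lia.
  by move=> <-; rewrite -H2; congr (_`_ _); lia.
have Fr : F`_r = 0 by apply: (Z _ (r.-1)); rewrite ?szF //; lia.
have Fr1 : F`_(r.-1) = 0 by apply: (Z _ (r.-1)); rewrite ?szF //; lia.
have szM' : size M = (n.+1 - k)%N by rewrite /M -defM szM.
have M0 : M != 0 by rewrite -size_poly_eq0 szM'; lia.
have Mr : M`_r = 1.
  have := lead_coefM M g; rewrite gm mulr1.
  rewrite /lead_coef szM' size_mul // szM' szg.
  have -> : (n.+1 - k + k.+1).-1.-1 = n by lia.
  have -> : (n.+1 - k).-1 = r by lia.
  move=> <-.
  have : (toQ p)`_n = 1 by rewrite coef_toQ pn.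
  rewrite eq_p coefD (Z Rp k) ?addr0 //; lia.
have cF : forall j, (0 < j)%N -> F`_j = f`_(j.-1) - M`_j.
  by move=> j j0; rewrite /F coefB coefXM; case: j j0.
rewrite /c /b defM -/M.
have -> : (r.-1 - 0 = r.-1)%N by lia.
have -> : (r - 0 = r)%N by lia.
have -> : (r.-1 - 1 = (r.-1).-1)%N by lia.
have -> : (r.-1 - 2 = (r - 2).-1)%N by lia.
move: Fr Fr1 lF; rewrite !cF; try lia.
move=> /eqP; rewrite subr_eq0 => /eqP ->.
move=> /eqP; rewrite subr_eq0 => /eqP ->.
have -> : (r - 1 = r.-1)%N by lia.
move=> /eqP; rewrite subr_eq => /eqP ->.
by rewrite Mr addrC.
Qed.
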